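(* Let $\Gamma=(V,m,\tau)$ be a weak $W$-graph and let $A\subseteq\Delta$. Then the representation $\mathbb{C}V$, restricted to $W(A)$, contains a copy of the sign representation of $W(A)$ if and only if $A\subseteq\tau(v)$ for some $v\in V$.
   Context: $W$ is a Weyl group with a fixed set $\Delta$ of simple roots; for a root $\alpha$, $s_\alpha$ is the reflection in the hyperplane orthogonal to $\alpha$. A weak $W$-graph is a triple $\Gamma=(V,m,\tau)$ where $V$ is a finite set, $m:V\times V\to\mathbb{C}$ is a map, and $\tau$ is a map from $V$ to the power set of $\Delta$, such that the linear maps $s_\alpha:\mathbb{C}V\to\mathbb{C}V$ ($\alpha\in\Delta$) given on basis vectors by $s_\alpha(v)=-v$ if $\alpha\in\tau(v)$ and $s_\alpha(v)=v-\sum_{u\in V,\ \alpha\in\tau(u)} m(u,v)u$ if $\alpha\notin\tau(v)$ define a representation of $W$ on $\mathbb{C}V$. For $A\subseteq\Delta$, $W(A)$ is the subgroup of $W$ generated by $\{s_\alpha:\alpha\in A\}$; its sign representation is the one-dimensional representation on which each $s_\alpha$, $\alpha\in A$, acts by $-1$. *)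

(* Defs.v *)
From HB Require Import structures.
From mathcomp Require Import all_boot all_order all_algebra all_field.
Set Implicit Arguments. Unset Strict Implicit. Unset Printing Implicit Defensive.
Import Order.TTheory GRing.Theory Num.Theory.
Local Open Scope ring_scope.

Section RootSystems.
Variables (R : realFieldType) (n : nat).

Definition dotp (u v : 'cV[R]_n) : R := (u^T *m v) 0 0.

(* the matrix of the reflection s_a in the hyperplane orthogonal to a,
   acting on column vectors:  y |-> y - (2 (a,y)/(a,a)) a *)
Definition reflmx (a : 'cV[R]_n) : 'M[R]_n :=
  1%:M - (2 / dotp a a) *: (a *m a^T).

Definition root_system (Phi : seq 'cV[R]_n) : Prop :=
  [/\ uniq Phi, 0 \notin Phi &
      (forall y : 'cV[R]_n, exists c : 'I_(size Phi) -> R,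
          y = \sum_(i < size Phi) c i *: Phi`_i)] /\
  [/\ (forall a b, a \in Phi -> b \in Phi -> b - (2 * dotp a b / dotp a a) *: a \in Phi),
      (forall a b, a \in Phi -> b \in Phi ->
          exists z : int, 2 * dotp a b / dotp a a = z%:~R) &
      (forall a (c : R), a \in Phi -> c *: a \in Phi -> c = 1 \/ c = -1)].

(* del : I -> R^n enumerates a set Delta of simple roots (a base) of Phi *)
Definition simple_system (Phi : seq 'cV[R]_n) (I : finType) (del : I -> 'cV[R]_n)
  : Prop :=
  [/\ (forall i, del i \in Phi),
      (forall c : I -> R, \sum_i c i *: del i = 0 -> forall i, c i = 0) &
      (forall b, b \in Phi -> exists c : I -> R,
          b = \sum_i c i *: del i /\
          ((forall i, 0 <= c i) \/ (forall i, c i <= 0)))].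

(* the subgroup of GL_n(R) generated by a set S of involutions
   (closure of 1 under right multiplication by elements of S) *)
Inductive gen_by (S : 'M[R]_n -> Prop) : 'M[R]_n -> Prop :=
| gen_by1 : gen_by S 1%:M
| gen_byM g s : gen_by S g -> S s -> gen_by S (g *m s).

Definition Weyl (Phi : seq 'cV[R]_n) : 'M[R]_n -> Prop :=
  gen_by (fun s => exists2 a, a \in Phi & s = reflmx a).

Definition Wsub (I : finType) (del : I -> 'cV[R]_n) (A : {set I})
  : 'M[R]_n -> Prop :=
  gen_by (fun s => exists2 i, i \in A & s = reflmx (del i)).

End RootSystems.

(* Weak W-graphs.  CV is C^#|V| (column vectors over algC), the basis vector
   indexed by j : 'I_#|V| being enum_val j. *)
Section WGraph.
Variables (I V : finType) (m : V -> V -> algC) (tau : V -> {set I}).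

(* matrix of the linear map s_alpha (alpha = del i) on CV:
   entry (k, j) = coefficient of enum_val k in s_alpha(enum_val j) *)
Definition Wgraph_mx (i : I) : 'M[algC]_#|V| :=
  \matrix_(k, j)
    let v := enum_val j in let u := enum_val k in
    if i \in tau v then (if u == v then -1 else 0)
    else (u == v)%:R - (if i \in tau u then m u v else 0).

Definition is_Wgraph_rep (R : realFieldType) (n : nat) (Phi : seq 'cV[R]_n)
  (del : I -> 'cV[R]_n) (rho : 'M[R]_n -> 'M[algC]_#|V|) : Prop :=
  [/\ rho 1%:M = 1%:M,
      (forall g h, Weyl Phi g -> Weyl Phi h -> rho (g *m h) = rho g *m rho h) &
      (forall i, rho (reflmx (del i)) = Wgraph_mx i)].

Definition weak_W_graph (R : realFieldType) (n : nat) (Phi : seq 'cV[R]_n)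
  (del : I -> 'cV[R]_n) : Prop :=
  exists rho, is_Wgraph_rep Phi del rho.

End WGraph.

Definition sign_char (R : realFieldType) (n : nat) (I : finType)
  (del : I -> 'cV[R]_n) (A : {set I}) (chi : 'M[R]_n -> algC) : Prop :=
  [/\ chi 1%:M = 1,
      (forall g h, Wsub del A g -> Wsub del A h -> chi (g *m h) = chi g * chi h) &
      (forall i, i \in A -> chi (reflmx (del i)) = -1)].

(* the restriction of rho to W(A) contains a copy of the sign representation:
   a nonzero vector x spanning a line on which W(A) acts by the sign character *)
Definition contains_sign (R : realFieldType) (n : nat) (I : finType)
  (del : I -> 'cV[R]_n) (A : {set I}) (N : nat) (rho : 'M[R]_n -> 'M[algC]_N)
  : Prop :=
  exists chi, sign_char del A chi /\
  exists2 x : 'cV[algC]_N, x != 0 &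
    forall g, Wsub del A g -> rho g *m x = chi g *: x.

(* Main.v *)
Require Import Defs.
From HB Require Import structures.
From mathcomp Require Import all_boot all_order all_algebra all_field.
Local Open Scope ring_scope.
Import GRing.Theory Num.Theory.

Lemma gen_by_mono (R : realFieldType) (n : nat) (S T : 'M[R]_n -> Prop) g :
  (forall s, S s -> T s) -> gen_by S g -> gen_by T g.
Proof.
move=> ST; elim=> [|h s _ IH Ss]; first exact: gen_by1.
exact: gen_byM IH (ST _ Ss).
Qed.

Lemma x_eq_oppx (x : algC) : x = - x -> x = 0.
Proof.
move=> h; have : x *+ 2 = 0 by rewrite mulr2n {1}h addNr.
by move/eqP; rewrite mulrn_eq0 /= => /eqP.
Qed.

Theorem corollary2p9 (R : realFieldType) (n : nat) (Phi : seq 'cV[R]_n)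
  (I : finType) (del : I -> 'cV[R]_n)
  (V : finType) (m : V -> V -> algC) (tau : V -> {set I})
  (rho : 'M[R]_n -> 'M[algC]_#|V|) (A : {set I}) :
  root_system Phi -> simple_system Phi del ->
  weak_W_graph m tau Phi del -> is_Wgraph_rep m tau Phi del rho ->
  contains_sign del A rho <-> exists v : V, A \subset tau v.
Proof.
move=> _ [delPhi _ _] _ [rho1 rhoM rhoS].
have WsubW g : Wsub del A g -> Weyl Phi g.
  apply: gen_by_mono => s [i _ ->]; exists (del i) => //.
have sW i : i \in A -> Wsub del A (reflmx (del i)).
  move=> iA; rewrite -[reflmx _]mul1mx; apply: gen_byM; first exact: gen_by1.
  by exists i.
split.
- move=> [chi [[chi1 chiM chiS] [x xn0 Hx]]].
  have [k xk] : exists k, x k 0 != 0.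
    apply/existsP; move: xn0; apply: contraR; rewrite negb_exists => /forallP H.
    apply/eqP/matrixP => a b; rewrite (ord1 b) mxE; exact/eqP/negbNE/H.
  exists (enum_val k); apply/subsetP => i iA.
  apply/negPn/negP => iv.
  have := Hx _ (sW i iA); rewrite rhoS chiS // scaleN1r => /matrixP /(_ k 0).
  rewrite !mxE (bigD1 k) //= big1 => [|j jk].
    rewrite !mxE /= (negbTE iv) eqxx subr0 mul1r addr0 => /x_eq_oppx /eqP.
    by rewrite (negbTE xk).
  rewrite !mxE /=; case: ifP => _.
    by rewrite (inj_eq enum_val_inj) eq_sym (negbTE jk) mul0r.
  by rewrite (negbTE iv) (inj_eq enum_val_inj) eq_sym (negbTE jk) subr0 mul0r.
- move=> [v Av].
  set k0 := enum_rank v; set x : 'cV[algC]_#|V| := delta_mx k0 0.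
  have coef B c : B *m x = c *: x -> c = B k0 k0.
    move/matrixP/(_ k0 0); rewrite -colE !mxE !eqxx mulr1 => <- //.
  have Mx i : i \in A -> Wgraph_mx m tau i *m x = - x.
    move=> iA; rewrite -colE; apply/matrixP => a b; rewrite (ord1 b) !mxE.
    rewrite /= enum_rankK (subsetP Av _ iA) eqxx andbT.
    have -> : (enum_val a == v) = (a == k0) by rewrite -(inj_eq enum_rank_inj) enum_valK.
    case: (a == k0) => /=; [by rewrite mulr1n | by rewrite mulr0n oppr0].
  have eig g : Wsub del A g -> exists c, rho g *m x = c *: x.
    elim=> [|h s Wh [c IH] [i iA ->]].
      by exists 1; rewrite rho1 mul1mx scale1r.
    exists (- c); rewrite rhoM ?rhoS; last 2 first.
    - exact: WsubW.
    - by apply: (WsubW); rewrite -[reflmx _]mul1mx; apply: gen_byM; [exact: gen_by1| exists i].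
    by rewrite -mulmxA Mx // mulmxN IH scaleNr.
  have eigk g : Wsub del A g -> rho g *m x = rho g k0 k0 *: x.
    by move=> Wg; have [c Hc] := eig g Wg; rewrite -(coef _ _ Hc).
  exists (fun g => rho g k0 k0); split; last first.
    exists x; last exact: eigk.
    apply/eqP => /matrixP /(_ k0 0); rewrite !mxE !eqxx /= => /eqP.
    by rewrite oner_eq0.
  split.
  + by rewrite rho1 mxE eqxx.
  + move=> g h Wg Wh; rewrite rhoM; [|exact: WsubW|exact: WsubW].
    symmetry; apply: coef.
    by rewrite -mulmxA eigk // -scalemxAr eigk // scalerA mulrC.
  + move=> i iA; rewrite rhoS mxE /= enum_rankK (subsetP Av _ iA) eqxx //.
Qed.
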